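(* For $\theta>0$ and an integer $n\ge1$, let $K_n(\theta)$ be a random variable with $P\{K_n(\theta)=k\}=|S_n^k|\theta^k/\theta_{(n)}$, $k=1,\dots,n$, where $\theta_{(n)}=\theta(\theta+1)\cdots(\theta+n-1)$ and $|S_n^k|$ is the coefficient of $\theta^k$ in $\theta_{(n)}$. Then, as $\theta\to\infty$, in probability: (Case A, $n$ fixed) $K_n(\theta)\to n$; (Case B, $n=n(\theta)\to\infty$, $\theta/n\to\infty$) $K_n(\theta)/n\to1$; (Case C, $n=n(\theta)\to\infty$, $\theta/n\to c\in(0,\infty)$) $K_n(\theta)/n\to\log\big(1+\frac1c\big)^c$; (Case D, $n=n(\theta)\to\infty$, $\theta/n\to0$) $K_n(\theta)/(\theta\log(n/\theta))\to1$.
   Context: $K_n(\theta)$ is the number of distinct alleles in a sample of size $n$ from a $PD(\theta)$ population. *)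

(* Defs.v *)
From HB Require Import structures.
From mathcomp Require Import all_boot all_order all_algebra.
From mathcomp Require Import all_classical all_reals all_analysis.
Set Implicit Arguments. Unset Strict Implicit. Unset Printing Implicit Defensive.
Import Order.TTheory GRing.Theory Num.Theory.
Import numFieldNormedType.Exports.
Local Open Scope classical_set_scope.
Local Open Scope ring_scope.

Definition rising_poly (R : realType) (n : nat) : {poly R} :=
  \prod_(i < n) ('X + (i%:R)%:P).

Definition stirling1u (R : realType) (n k : nat) : R := (rising_poly R n)`_k.

Definition rising (R : realType) (theta : R) (n : nat) : R :=
  (rising_poly R n).[theta].

Definition Kpmf (R : realType) (theta : R) (n k : nat) : R :=
  stirling1u R n k * theta ^+ k / rising theta n.

(* P{ |K_n(theta)/a - L| > eps } for K_n(theta) with the law above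
   (support {1,...,n}). *)
Definition Kdev (R : realType) (theta : R) (n : nat) (a L eps : R) : R :=
  \sum_(1 <= k < n.+1 | eps < `| k%:R / a - L |) Kpmf theta n k.

Definition K_cvg_in_prob (R : realType) (n : R -> nat) (a : R -> R) (L : R)
  : Prop :=
  forall eps : R, 0 < eps ->
    (fun theta => Kdev theta (n theta) (a theta) L eps) @ +oo --> (0 : R).

(* Main.v *)
Require Import Defs.
From HB Require Import structures.
From mathcomp Require Import all_boot all_order all_algebra.
From mathcomp Require Import all_classical all_reals all_analysis.
From mathcomp Require Import ring lra.
Import Order.TTheory GRing.Theory Num.Theory.
Import numFieldNormedType.Exports.
Local Open Scope classical_set_scope.
Local Open Scope ring_scope.

Section S.
Variable R : realType.
Implicit Types (p : {poly R}) (θ c : R).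
Definition Tm p θ (m : nat) := \sum_(0 <= k < size p) p`_k * θ^+k * k%:R^+m.

Lemma Tm_widen p θ m N : (size p <= N)%N ->
  \sum_(0 <= k < N) p`_k * θ^+k * k%:R^+m = Tm p θ m.
Proof.
move=> H; rewrite /Tm (big_cat_nat (leq0n (size p)) H) /=.
rewrite [X in _ + X]big_nat_cond [X in _ + X]big1 ?addr0 // => k /andP[/andP[Hk _] _].
by rewrite nth_default // !mul0r.
Qed.

Lemma Tm_rec p θ c m : Tm (p * ('X + c%:P)) θ m =
  θ * \sum_(0 <= j < size p) p`_j * θ^+j * (j.+1)%:R^+m + c * Tm p θ m.
Proof.
have Hs : (size (p * ('X + c%:P))%R <= (size p).+1)%N.
  by apply: (leq_trans (size_mul_leq _ _)); rewrite size_XaddC addn2.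
rewrite -(Tm_widen _ _ _ _ Hs).
under eq_bigr do rewrite mulrDr coefD coefMX coefMC !mulrDl.
rewrite big_split /= big_nat_recl // eqxx !mul0r add0r.
rewrite -(Tm_widen _ _ _ _ (leqnSn (size p))).
rewrite !big_distrr /=.
congr (_ + _); apply: eq_bigr => i _ /=; rewrite ?exprS; ring.
Qed.
Lemma Tm_sum_quad p θ N x y z : (size p <= N)%N ->
  \sum_(0 <= k < N) p`_k * θ^+k * (x * k%:R^+2 + y * k%:R + z) =
  x * Tm p θ 2 + y * Tm p θ 1 + z * Tm p θ 0.
Proof.
move=> H; rewrite -!(Tm_widen _ _ _ _ H) !big_distrr -!big_split /=.
by apply: eq_bigr => k _; rewrite expr1 expr0; ring.
Qed.

Lemma Tm_S1 p θ : \sum_(0 <= j < size p) p`_j * θ^+j * (j.+1)%:R^+1 = Tm p θ 1 + Tm p θ 0.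
Proof.
rewrite /Tm -big_split /=; apply: eq_bigr => j _; rewrite -addn1 natrD; ring.
Qed.

Lemma Tm_S2 p θ : \sum_(0 <= j < size p) p`_j * θ^+j * (j.+1)%:R^+2 =
  Tm p θ 2 + 2 * Tm p θ 1 + Tm p θ 0.
Proof.
rewrite /Tm big_distrr -!big_split /=; apply: eq_bigr => j _; rewrite -addn1 natrD; ring.
Qed.

Lemma Tm_S0 p θ : \sum_(0 <= j < size p) p`_j * θ^+j * (j.+1)%:R^+0 = Tm p θ 0.
Proof. by rewrite /Tm; apply: eq_bigr => j _; rewrite !expr0. Qed.

Lemma rising_polyS n : rising_poly R n.+1 = rising_poly R n * ('X + (n%:R)%:P).
Proof. by rewrite /rising_poly big_ord_recr. Qed.

Lemma size_rising n : (size (rising_poly R n) <= n.+1)%N.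
Proof.
elim: n => [|n IH]; first by rewrite /rising_poly big_ord0 size_poly1.
rewrite rising_polyS; apply: (leq_trans (size_mul_leq _ _)).
by rewrite size_XaddC addn2.
Qed.

Lemma coef_rising_ge0 n k : 0 <= (rising_poly R n)`_k.
Proof.
elim: n k => [|n IH] k.
  by rewrite /rising_poly big_ord0 coef1; case: (k == 0)%N.
rewrite rising_polyS mulrDr coefD coefMX coefMC.
apply: addr_ge0; first by case: (k == 0)%N => //.
by apply: mulr_ge0.
Qed.

Definition Am θ n := \sum_(0 <= i < n) θ / (θ + i%:R).
Definition Vm θ n := \sum_(0 <= i < n) θ / (θ + i%:R) * (i%:R / (θ + i%:R)).

Lemma moments θ n : 0 < θ ->
  0 < Tm (rising_poly R n) θ 0 /\
  Tm (rising_poly R n) θ 1 = Am θ n * Tm (rising_poly R n) θ 0 /\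
  Tm (rising_poly R n) θ 2 = (Vm θ n + Am θ n ^+ 2) * Tm (rising_poly R n) θ 0.
Proof.
move=> th0; elim: n => [|n [IH0 [IH1 IH2]]].
  rewrite /Tm /Am /Vm /rising_poly big_ord0 size_poly1 !big_nat1 coef1 /= !big_geq //.
  by rewrite !expr0 !mulr1 !expr0n /= !mulr0 add0r; split => //; rewrite ltr01.
have hn : 0 < θ + n%:R by apply: (lt_le_trans th0); rewrite lerDl.
rewrite rising_polyS !Tm_rec Tm_S0 Tm_S1 Tm_S2 /Am /Vm !big_nat_recr //= -/(Am θ n) -/(Vm θ n).
split; first by rewrite -mulrDl; apply: mulr_gt0.
rewrite IH1 IH2; split; field; rewrite gt_eqF //.
Qed.
Lemma rising_Tm θ n : rising θ n = Tm (rising_poly R n) θ 0.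
Proof.
rewrite /rising horner_coef /Tm big_mkord; apply: eq_bigr => k _.
by rewrite expr0 mulr1.
Qed.

Lemma Kdev_bound θ n (a L eps : R) : 0 < θ -> 0 < eps -> 0 < a ->
  0 <= Kdev θ n a L eps <= (Vm θ n / a^+2 + (Am θ n / a - L)^+2) / eps^+2.
Proof.
move=> th0 e0 a0.
have [r0 [r1 r2]] := moments θ n th0.
rewrite -rising_Tm in r0 r1 r2.
set r := rising θ n in r0 r1 r2.
have pmf0 k : 0 <= Kpmf θ n k.
  rewrite /Kpmf /stirling1u; apply: divr_ge0; last exact: ltW.
  by apply: mulr_ge0; [apply: coef_rising_ge0 | apply: exprn_ge0; apply: ltW].
apply/andP; split; first by rewrite /Kdev; apply: sumr_ge0.
set G := fun k : nat => Kpmf θ n k * ((k%:R / a - L)^+2 / eps^+2).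
have G0 k : 0 <= G k.
  apply: mulr_ge0 => //; apply: divr_ge0; rewrite ?sqr_ge0 //; apply: exprn_ge0; exact: ltW.

have H1 : Kdev θ n a L eps <= \sum_(0 <= k < n.+1) G k.
  rewrite /Kdev big_mkcond (@big_ltn _ _ _ 0 n.+1) //.
  apply: (@le_trans _ _ (\sum_(1 <= i < n.+1) G i)); last by rewrite lerDr; exact: G0.
  apply: ler_sum => k _; case: ifP => hk; last exact: G0.
  rewrite /G -[X in X <= _]mulr1; apply: ler_wpM2l; first exact: pmf0.
  rewrite ler_pdivlMr ?exprn_gt0 // mul1r -[X in _ <= X]real_normK ?num_real //.
  by rewrite !expr2; apply: ler_pM; rewrite ?ltW.
have Gk j : G j = (rising_poly R n)`_j * θ^+j *
     ((a^+2 * r * eps^+2)^-1 * j%:R^+2 + (- 2 * L / (a * r * eps^+2)) * j%:R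
      + L^+2 / (r * eps^+2)).
  rewrite /G /Kpmf /stirling1u -/r; field; by rewrite ?mulf_neq0 ?expf_neq0 ?gt_eqF.
apply: (le_trans H1); rewrite (eq_bigr _ (fun k _ => Gk k)) Tm_sum_quad ?size_rising // r1 r2.
rewrite -rising_Tm -/r le_eqVlt; apply/orP; left; apply/eqP; field; by rewrite ?mulf_neq0 ?expf_neq0 ?gt_eqF.
Qed.
Lemma ln_step (x : R) : 0 < x ->
  (x + 1)^-1 <= ln (x + 1) - ln x <= x^-1.
Proof.
move=> x0; have x1 : 0 < x + 1 by lra.
apply/andP; split.
- have e : x = (x + 1) * (1 + - (x + 1)^-1) by field; rewrite gt_eqF.
  have h1 : 0 < 1 + - (x+1)^-1.
    rewrite subr_gt0 invf_lt1 //; lra.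
  rewrite [X in _ - ln X]e lnM ?posrE //.
  have : ln (1 + - (x+1)^-1) <= - (x+1)^-1.
    apply: le_ln1Dx; rewrite ltrN2 invf_lt1 //; lra.
  lra.
- have e : x + 1 = x * (1 + x^-1) by field; rewrite gt_eqF.
  have h1 : 0 < 1 + x^-1 by rewrite addr_gt0 ?invr_gt0.
  rewrite e lnM ?posrE //.
  have : ln (1 + x^-1) <= x^-1.
    apply: le_ln1Dx; apply: (lt_trans (y:=0)); rewrite ?invr_gt0 //; lra.
  lra.
Qed.

Definition Fm θ (n : nat) := θ * (ln (θ + n%:R) - ln θ).

Lemma Am_log θ n : 0 < θ -> Fm θ n <= Am θ n <= Fm θ n + 1.
Proof.
move=> th0.
have tel : Fm θ n = \sum_(0 <= i < n) θ * (ln (θ + i.+1%:R) - ln (θ + i%:R)).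
  rewrite /Fm -big_distrr /= (telescope_sumr (fun i => ln (θ + i%:R))) //.
  by rewrite addr0.
have tel2 : \sum_(0 <= i < n) (θ / (θ + i%:R) - θ / (θ + i.+1%:R)) = 1 - θ / (θ + n%:R).
  set f := fun k : nat => θ / (θ + k%:R).
  rewrite (eq_bigr (fun i => - (f i.+1 - f i))); last by move=> i _; rewrite opprB.
  by rewrite sumrN telescope_sumr // /f addr0 divff ?gt_eqF // opprB.
have st i : θ / (θ + i.+1%:R) <= θ * (ln (θ + i.+1%:R) - ln (θ + i%:R)) <= θ / (θ + i%:R).
  have hi : 0 < θ + i%:R by apply: (lt_le_trans th0); rewrite lerDl.
  have /andP[h1 h2] := ln_step _ hi; rewrite -natr1 addrA.
  by apply/andP; split; rewrite ler_pM2l.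
apply/andP; split.
  rewrite tel /Am; apply: ler_sum => i _; by case/andP: (st i).
have h : Am θ n - \sum_(0 <= i < n) θ / (θ + i.+1%:R) <= 1.
  rewrite /Am -sumrB tel2.
  have : 0 <= θ / (θ + n%:R) by apply: divr_ge0; [exact: ltW | apply: addr_ge0; [exact: ltW | exact: ler0n]].
  lra.
have h' : \sum_(0 <= i < n) θ / (θ + i.+1%:R) <= Fm θ n.
  rewrite tel; apply: ler_sum => i _; by case/andP: (st i).
lra.
Qed.

Lemma Am_bounds θ n : 0 < θ ->
  [/\ 0 <= Vm θ n, Vm θ n <= Am θ n, Vm θ n <= n%:R - Am θ n,
      n%:R - Am θ n <= n%:R ^+ 2 / θ & Am θ n <= n%:R].
Proof.
move=> th0.
have hi i : 0 < θ + i%:R by apply: (lt_le_trans th0); rewrite lerDl.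
have nA : n%:R - Am θ n = \sum_(0 <= i < n) i%:R / (θ + i%:R).
  have -> : (n%:R : R) = \sum_(0 <= i < n) (1 : R) by rewrite sumr_const_nat subn0.
  rewrite /Am -sumrB; apply: eq_bigr => k _.
  have hk := hi k; field; by rewrite gt_eqF.
have q01 i : 0 <= θ / (θ + i%:R) /\ 0 <= i%:R / (θ + i%:R) <= 1.
  split; first by apply: divr_ge0; apply: ltW; rewrite ?hi.
  apply/andP; split; first by apply: divr_ge0; [exact: ler0n | exact: ltW (hi i)].
  by rewrite ler_pdivrMr // mul1r lerDr ltW.
split.
- by apply: sumr_ge0 => i _; have [h1 /andP[h2 _]] := q01 i; apply: mulr_ge0.
- apply: ler_sum => i _; have [h1 /andP[h2 h3]] := q01 i.
  by rewrite -[X in _ <= X]mulr1 ler_wpM2l.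
- rewrite nA; apply: ler_sum => i _; have [h1 /andP[h2 h3]] := q01 i.
  rewrite -[X in _ <= X]mul1r ler_wpM2r //.
  by rewrite ler_pdivrMr // mul1r lerDl ler0n.
- rewrite nA expr2.
  have -> : n%:R * n%:R / θ = \sum_(0 <= i < n) (n%:R / θ) :> R.
    by rewrite sumr_const_nat subn0 -mulrA mulr_natl.
  apply: ler_sum_nat => i /andP[_ hin].
  have hi' := hi i.
  rewrite ler_pdivrMr // mulrAC ler_pdivlMr //.
  have : (i%:R : R) <= n%:R by rewrite ler_nat ltnW.
  have : 0 <= (i%:R : R) by [].
  nra.
- have : 0 <= n%:R - Am θ n by rewrite nA; apply: sumr_ge0 => i _; have [_ /andP[]] := q01 i.
  lra.
Qed.
Lemma conclude (n : R -> nat) (a : R -> R) (L : R) :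
  (\forall t \near +oo, 0 < a t) ->
  (fun t => Vm t (n t) / a t ^+ 2) @ +oo --> (0 : R) ->
  (fun t => Am t (n t) / a t) @ +oo --> L ->
  K_cvg_in_prob n a L.
Proof.
move=> ha hV hA eps e0.
set h := fun t => (Vm t (n t) / a t ^+ 2 +
   (Am t (n t) / a t - L) * (Am t (n t) / a t - L)) * (eps ^+ 2)^-1.
have hh : h @ +oo --> (0 + (L - L) * (L - L)) * (eps ^+ 2)^-1.
  apply: cvgM; last exact: cvg_cst.
  apply: cvgD; first exact: hV.
  by apply: cvgM; apply: cvgB => //; exact: cvg_cst.
rewrite subrr mulr0 addr0 mul0r in hh.
apply: (@squeeze_cvgr _ _ _ _ (fun _ => 0) h); last 2 first.
- exact: cvg_cst.
- exact: hh.
near=> t.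
have t0 : 0 < t by near: t; apply: nbhs_pinfty_gt; rewrite num_real.
have a0 : 0 < a t by near: t; exact: ha.
have := @Kdev_bound t (n t) (a t) L eps t0 e0 a0.
by rewrite /h -expr2.
Unshelve. all: end_near.
Qed.
Lemma sq0 (f g : R -> R) : (\forall t \near +oo, 0 <= f t <= g t) ->
  g @ +oo --> (0 : R) -> f @ +oo --> (0 : R).
Proof.
move=> H hg; apply: (@squeeze_cvgr _ _ _ _ (fun _ => 0) g) => //.
exact: cvg_cst.
Qed.

Lemma sqL (f h g : R -> R) (L : R) : (\forall t \near +oo, `|f t - h t| <= g t) ->
  h @ +oo --> L -> g @ +oo --> (0 : R) -> f @ +oo --> L.
Proof.
move=> H hh hg.
have l1 : (fun t => h t - g t) @ +oo --> L by rewrite -[X in _ --> X]subr0; apply: cvgB.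
have l2 : (fun t => h t + g t) @ +oo --> L by rewrite -[X in _ --> X]addr0; apply: cvgD.
apply: (@squeeze_cvgr _ _ _ _ (fun t => h t - g t) (fun t => h t + g t) f _ L l1 l2).
by near=> t; rewrite -ler_distl; near: t.
Unshelve. all: end_near.
Qed.

Lemma invy (g : R -> R) : (\forall t \near +oo, 0 < g t) -> g @ +oo --> +oo ->
  (fun t => (g t)^-1) @ +oo --> (0 : R).
Proof.
move=> gp /cvgryPge hg; apply/cvgr0Pnorm_le => e e0.
have := hg e^-1; move=> H.
near=> t.
have g0 : 0 < g t by near: t.
have ge : e^-1 <= g t by near: t.
rewrite ger0_norm; last by rewrite invr_ge0 ltW.
by rewrite -(invrK e) lef_pV2 ?posrE ?invr_gt0.
Unshelve. all: end_near.
Qed.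

Lemma cinv (c : R) : (fun t : R => c * t^-1) @ +oo --> (0 : R).
Proof.
rewrite -(mulr0 c); apply: cvgM; first exact: cvg_cst.
apply: invy; first by apply: nbhs_pinfty_gt; rewrite num_real.
by apply/cvgryPge => A; apply: nbhs_pinfty_ge; rewrite num_real.
Qed.

Lemma caseA (n : nat) : (1 <= n)%N ->
  K_cvg_in_prob (fun _ : R => n) (fun _ => 1) n%:R.
Proof.
move=> n1; apply: conclude.
- by near=> t; exact: ltr01.
- apply: (@sq0 _ (fun t => n%:R ^+ 2 * t^-1)); last exact: cinv.
  near=> t.
  have t0 : 0 < t by near: t; apply: nbhs_pinfty_gt; rewrite num_real.
  have [h1 h2 h3 h4 h5] := Am_bounds t n t0.
  by rewrite expr1n divr1 h1 /=; exact: le_trans h3 h4.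
- apply: (@sqL _ (fun _ => n%:R) (fun t => n%:R ^+ 2 * t^-1)); last exact: cinv.
    near=> t.
    have t0 : 0 < t by near: t; apply: nbhs_pinfty_gt; rewrite num_real.
    have [h1 h2 h3 h4 h5] := Am_bounds t n t0.
    by rewrite divr1 distrC ger0_norm // subr_ge0.
  exact: cvg_cst.
Unshelve. all: end_near.
Qed.
Lemma alg_B (t N A V : R) : 0 < t -> 1 <= N -> V <= N - A -> N - A <= N^+2 / t ->
  A <= N -> 0 <= V ->
  0 <= V / N^+2 <= 1 * t^-1 /\ `|A / N - 1| <= (t / N)^-1.
Proof.
move=> t0 N1 h3 h4 h5 h1.
have N0 : 0 < N by apply: lt_le_trans N1.
split.
  apply/andP; split; first by apply: divr_ge0; rewrite // exprn_ge0 // ltW.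
  rewrite ler_pdivrMr ?exprn_gt0 // mul1r mulrC; exact: le_trans h3 h4.
have e : A / N - 1 = - ((N - A) / N) by field; rewrite gt_eqF.
rewrite e normrN ger0_norm; last by apply: divr_ge0; rewrite ?subr_ge0 // ltW.
rewrite invf_div ler_pdivrMr //.
have -> : N / t * N = N ^+ 2 / t by rewrite expr2; ring.
exact: h4.
Qed.

Lemma caseB (n : R -> nat) :
     (fun t => (n t)%:R : R) @ +oo --> +oo ->
     (fun t => t / (n t)%:R) @ +oo --> +oo ->
     K_cvg_in_prob n (fun t => (n t)%:R) 1.
Proof.
move=> hn htn.
have N1 := proj1 (cvgryPge _) hn 1.
apply: conclude.
- near=> t; apply: (lt_le_trans ltr01); near: t; exact: N1.
- apply: (@sq0 _ (fun t => 1 * t^-1)); last exact: cinv.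
  near=> t.
  have t0 : 0 < t by near: t; apply: nbhs_pinfty_gt; rewrite num_real.
  have n1 : 1 <= (n t)%:R :> R by near: t; exact: N1.
  have [h1 h2 h3 h4 h5] := Am_bounds t (n t) t0.
  by have [hh _] := alg_B _ _ _ _ t0 n1 h3 h4 h5 h1; exact: hh.
- apply: (@sqL _ (fun _ => 1) (fun t => (t / (n t)%:R)^-1)).
  + near=> t.
    have t0 : 0 < t by near: t; apply: nbhs_pinfty_gt; rewrite num_real.
    have n1 : 1 <= (n t)%:R :> R by near: t; exact: N1.
    have [h1 h2 h3 h4 h5] := Am_bounds t (n t) t0.
    by have [_ hh] := alg_B _ _ _ _ t0 n1 h3 h4 h5 h1; exact: hh.
  + exact: cvg_cst.
  + apply: invy => //; near=> t.
    have t0 : 0 < t by near: t; apply: nbhs_pinfty_gt; rewrite num_real.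
    have n1 : 1 <= (n t)%:R :> R by near: t; exact: N1.
    by apply: divr_gt0 => //; apply: lt_le_trans n1.
Unshelve. all: end_near.
Qed.
Lemma alg_C (N A F V : R) : 1 <= N -> F <= A <= F + 1 -> 0 <= V -> V <= A -> A <= N ->
  0 <= V / N^+2 <= N^-1 /\ `|A / N - F / N| <= N^-1.
Proof.
move=> N1 /andP[hF1 hF2] h1 h2 h5.
have N0 : 0 < N by apply: lt_le_trans N1.
split.
  apply/andP; split; first by apply: divr_ge0; rewrite // exprn_ge0 // ltW.
  rewrite ler_pdivrMr ?exprn_gt0 //.
  have -> : N^-1 * N^+2 = N by rewrite expr2 mulrA mulVf ?gt_eqF // mul1r.
  exact: le_trans h2 h5.
have hN : `|N^-1| = N^-1 by rewrite ger0_norm // invr_ge0 ltW.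
have hAF : `|A - F| = A - F by rewrite ger0_norm // subr_ge0.
rewrite -mulrBl normrM hN hAF.
apply: (@le_trans _ _ (1 * N^-1)); last by rewrite mul1r.
apply: ler_wpM2r; [rewrite invr_ge0; exact: ltW | lra].
Qed.

Lemma Fm_ratio (t : R) (n : nat) : 0 < t -> (0 < n)%N ->
  Fm t n = n%:R * ((t / n%:R) * ln (1 + (t / n%:R)^-1)).
Proof.
move=> t0 n0.
have N0 : (0 : R) < n%:R by rewrite ltr0n.
have h : 0 < 1 + (t / n%:R)^-1 by rewrite addr_gt0 // invr_gt0 divr_gt0.
rewrite /Fm.
have -> : t + n%:R = t * (1 + (t / n%:R)^-1) by field; rewrite !gt_eqF.
rewrite lnM ?posrE //.
field; by rewrite gt_eqF.
Qed.

Lemma caseC (n : R -> nat) (c : R) : 0 < c ->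
     (fun t => (n t)%:R : R) @ +oo --> +oo ->
     (fun t => t / (n t)%:R) @ +oo --> c ->
     K_cvg_in_prob n (fun t => (n t)%:R) (ln ((1 + c^-1) `^ c)).
Proof.
move=> c0 hn htn.
rewrite ln_powR.
have N1 := proj1 (cvgryPge _) hn 1.
have Ninv : (fun t => ((n t)%:R : R)^-1) @ +oo --> (0 : R).
  apply: invy => //; near=> t; apply: (lt_le_trans ltr01); near: t; exact: N1.
apply: conclude.
- near=> t; apply: (lt_le_trans ltr01); near: t; exact: N1.
- apply: (@sq0 _ (fun t => ((n t)%:R)^-1)) => //.
  near=> t.
  have t0 : 0 < t by near: t; apply: nbhs_pinfty_gt; rewrite num_real.
  have n1 : 1 <= (n t)%:R :> R by near: t; exact: N1.
  have [h1 h2 h3 h4 h5] := Am_bounds t (n t) t0.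
  by have [hh _] := alg_C _ _ _ _ n1 (Am_log _ (n t) t0) h1 h2 h5; exact: hh.
- apply: (@sqL _ (fun t => (t / (n t)%:R) * ln (1 + (t / (n t)%:R)^-1))
     (fun t => ((n t)%:R)^-1)) => //.
  + near=> t.
    have t0 : 0 < t by near: t; apply: nbhs_pinfty_gt; rewrite num_real.
    have n1 : 1 <= (n t)%:R :> R by near: t; exact: N1.
    have n0 : (0 < n t)%N by rewrite -(ltr0n R); apply: lt_le_trans n1.
    have [h1 h2 h3 h4 h5] := Am_bounds t (n t) t0.
    have [_ hh] := alg_C _ _ _ _ n1 (Am_log _ (n t) t0) h1 h2 h5.
    move: hh; rewrite Fm_ratio // mulrAC mulfV ?mul1r //.
    by rewrite gt_eqF // ltr0n.
  + apply: cvgM => //.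
    apply: continuous_cvg; first by apply: continuous_ln; rewrite addr_gt0 // invr_gt0.
    apply: cvgD; first exact: cvg_cst.
    by apply: cvgV => //; rewrite gt_eqF.
Unshelve. all: end_near.
Qed.
Lemma alg_D (t N A V F g l2 : R) : 0 < t -> 0 < N -> 0 < l2 -> l2 <= g ->
  F <= A <= F + 1 -> 0 <= V -> V <= A -> 0 <= F - t * g <= t * (t / N) ->
  0 <= V / (t * g)^+2 <= (1 + (1 * t^-1 + t / N) * l2^-1) * (1 * t^-1 * l2^-1) /\
  `|A / (t * g) - 1| <= (1 * t^-1 + t / N) * l2^-1.
Proof.
move=> t0 N0 l0 lg /andP[hF1 hF2] h1 h2 /andP[hd1 hd2].
set u := (1 * t^-1 + t / N) * l2^-1.
set a := t * g in hd1 hd2 *.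
have tl0 : 0 < t * l2 by apply: mulr_gt0.
have al : t * l2 <= a by rewrite /a ler_wpM2l // ltW.
have a0 : 0 < a by apply: lt_le_trans al.
have u0 : 0 <= u by apply: mulr_ge0; rewrite ?invr_ge0 ?addr_ge0 ?mul1r ?invr_ge0 ?divr_ge0 // ltW.
have ue : u * (t * l2) = 1 + t * (t / N).
  rewrite /u; field; by rewrite !gt_eqF.
have Aa0 : 0 <= A - a by lra.
have Aa1 : A - a <= u * a.
  apply: (@le_trans _ _ (u * (t * l2))); last by rewrite ler_wpM2l.
  rewrite ue; lra.
have P2 : `|A / a - 1| <= u.
  have -> : A / a - 1 = (A - a) / a by field; rewrite gt_eqF.
  rewrite ger0_norm; last by apply: divr_ge0 => //; exact: ltW.
  by rewrite ler_pdivrMr.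
split=> //.
apply/andP; split; first by apply: divr_ge0 => //; apply: exprn_ge0; exact: ltW.
have hA : A / a <= 1 + u.
  have : A / a - 1 <= u by apply: le_trans P2; exact: ler_norm.
  lra.
have ha : a^-1 <= 1 * t^-1 * l2^-1.
  rewrite mul1r -invfM lef_pV2 ?posrE //.
apply: (@le_trans _ _ (A / a * a^-1)).
  rewrite expr2 invfM mulrA.
  by do 2 (apply: ler_wpM2r; first by rewrite invr_ge0 ltW).
apply: ler_pM => //.
- by apply: divr_ge0 => //; [apply: le_trans h2 | exact: ltW].
- by rewrite invr_ge0 ltW.
Qed.
Lemma D_facts (t : R) (n : nat) : 0 < t -> 1 <= n%:R :> R -> t / n%:R <= 2^-1 ->
  ln 2 <= ln (n%:R / t) /\ 0 <= Fm t n - t * ln (n%:R / t) <= t * (t / n%:R).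
Proof.
move=> t0 n1 htn.
have N0 : (0 : R) < n%:R by apply: lt_le_trans n1.
have q0 : 0 < t / n%:R by apply: divr_gt0.
have Nt0 : 0 < n%:R / t by apply: divr_gt0.
split.
  rewrite ler_ln ?posrE //.
  have -> : n%:R / t = (t / n%:R)^-1 by rewrite invf_div.
  by rewrite -[X in X <= _]invrK lef_pV2 ?posrE ?invr_gt0.
have e1 : ln (t + n%:R) = ln n%:R + ln (1 + t / n%:R).
  rewrite -lnM ?posrE ?addr_gt0 //; congr ln; field; by rewrite gt_eqF.
have e2 : ln n%:R = ln (n%:R / t) + ln t.
  rewrite -lnM ?posrE //; congr ln; field; by rewrite gt_eqF.
have -> : Fm t n - t * ln (n%:R / t) = t * ln (1 + t / n%:R).
  rewrite /Fm e1 e2; ring.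
apply/andP; split.
  by apply: mulr_ge0; [exact: ltW | apply: ln_ge0; rewrite lerDl ltW].
apply: ler_wpM2l; first exact: ltW.
apply: le_ln1Dx.
apply: (@lt_trans _ _ 0) => //; rewrite ltrN10.
Qed.

Lemma caseD (n : R -> nat) :
     (fun t => (n t)%:R : R) @ +oo --> +oo ->
     (fun t => t / (n t)%:R) @ +oo --> (0 : R) ->
     K_cvg_in_prob n (fun t => t * ln ((n t)%:R / t)) 1.
Proof.
move=> hn htn.
have N1 := proj1 (cvgryPge _) hn 1.
have H2 := proj1 (cvgr0Pnorm_le _) htn (2^-1) ltac:(by rewrite invr_gt0).
have l0 : (0 : R) < ln 2 by apply: ln_gt0; rewrite ltr1n.
set u := fun t => (1 * t^-1 + t / (n t)%:R) * (ln (2 : R))^-1.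
have hu : u @ +oo --> (0 : R).
  rewrite -(mul0r (ln (2:R))^-1) -[X in X * _](addr0 0).
  apply: cvgM; last exact: cvg_cst.
  by apply: cvgD => //; exact: cinv.
apply: conclude.
- near=> t.
  have t0 : 0 < t by near: t; apply: nbhs_pinfty_gt; rewrite num_real.
  have n1 : 1 <= (n t)%:R :> R by near: t; exact: N1.
  have h2 : `|t / (n t)%:R| <= 2^-1 by near: t; exact: H2.
  have [lg _] := D_facts _ _ t0 n1 (le_trans (ler_norm _) h2).
  by apply: mulr_gt0 => //; apply: lt_le_trans lg.
- apply: (@sq0 _ (fun t => (1 + u t) * (1 * t^-1 * (ln (2:R))^-1))).
    near=> t.
    have t0 : 0 < t by near: t; apply: nbhs_pinfty_gt; rewrite num_real.
    have n1 : 1 <= (n t)%:R :> R by near: t; exact: N1.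
    have h2 : `|t / (n t)%:R| <= 2^-1 by near: t; exact: H2.
    have [lg hd] := D_facts _ _ t0 n1 (le_trans (ler_norm _) h2).
    have [h1 hh2 h3 h4 h5] := Am_bounds t (n t) t0.
    have [P1 _] := alg_D _ _ _ _ _ _ _ t0 (lt_le_trans ltr01 n1) l0 lg (Am_log _ (n t) t0) h1 hh2 hd.
    exact: P1.
  rewrite -(mulr0 (1 + 0)); apply: cvgM; first by apply: cvgD => //; exact: cvg_cst.
  rewrite -(mul0r (ln (2:R))^-1); apply: cvgM; [exact: cinv | exact: cvg_cst].
- apply: (@sqL _ (fun _ => 1) u) => //; last exact: cvg_cst.
  near=> t.
  have t0 : 0 < t by near: t; apply: nbhs_pinfty_gt; rewrite num_real.
  have n1 : 1 <= (n t)%:R :> R by near: t; exact: N1.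
  have h2 : `|t / (n t)%:R| <= 2^-1 by near: t; exact: H2.
  have [lg hd] := D_facts _ _ t0 n1 (le_trans (ler_norm _) h2).
  have [h1 hh2 h3 h4 h5] := Am_bounds t (n t) t0.
  have [_ P2] := alg_D _ _ _ _ _ _ _ t0 (lt_le_trans ltr01 n1) l0 lg (Am_log _ (n t) t0) h1 hh2 hd.
  exact: P2.
Unshelve. all: end_near.
Qed.
End S.

Theorem corollary4p1 (R : realType) :
  (* Case A: n fixed *)
  (forall n : nat, (1 <= n)%N ->
     K_cvg_in_prob (fun _ : R => n) (fun _ => 1) n%:R) /\
  (* Case B: n -> oo, theta/n -> oo *)
  (forall n : R -> nat,
     (fun t => (n t)%:R : R) @ +oo --> +oo ->
     (fun t => t / (n t)%:R) @ +oo --> +oo ->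
     K_cvg_in_prob n (fun t => (n t)%:R) 1) /\
  (* Case C: n -> oo, theta/n -> c in (0,oo) *)
  (forall (n : R -> nat) (c : R), 0 < c ->
     (fun t => (n t)%:R : R) @ +oo --> +oo ->
     (fun t => t / (n t)%:R) @ +oo --> c ->
     K_cvg_in_prob n (fun t => (n t)%:R) (ln ((1 + c^-1) `^ c))) /\
  (* Case D: n -> oo, theta/n -> 0 *)
  (forall n : R -> nat,
     (fun t => (n t)%:R : R) @ +oo --> +oo ->
     (fun t => t / (n t)%:R) @ +oo --> (0 : R) ->
     K_cvg_in_prob n (fun t => t * ln ((n t)%:R / t)) 1).
Proof.
split; first by move=> n n1; exact: caseA.
split; first by move=> n; exact: caseB.
split; first by move=> n c; exact: caseC.
by move=> n; exact: caseD.
Qed.
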